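(* Consider the single-block on-chain auction game described in the context (with reserve price $r=0$), and suppose bidders $1,\dots,n$ bid truthfully and use a common tipping function $t:[0,1]\to\mathbb{R}_+$ satisfying $t(v)\le v/n$ for all $v\in[0,1]$. Then a best response for bidder 0, as a function of his value $v_0$ and the observed vector of tips $(t_1,\dots,t_n)$, is: bribe, i.e. offer the proposer $\sum_{i=1}^n t_i$ in exchange for excluding all of bidder $1$ through $n$'s bids, if $\sum_{i=1}^n t_i\le v_0$; and do not bribe if $\sum_{i=1}^n t_i>v_0$.
   Context: Single-block on-chain auction game. A seller has one indivisible good; there are $n+1$ buyers $N=\{0,1,\dots,n\}$ with quasilinear utilities and independent private values $v_i\in[0,1]$ ($v_0\sim F_0$, $v_1,\dots,v_n$ i.i.d. $\sim F$), common knowledge of $n,F,F_0$. The seller runs a sealed-bid second-price auction with reserve $r$ in a single block built by a single profit-maximizing proposer. Buyers $1,\dots,n$ simultaneously submit a private bid $b_i$ and a public tip $t_i\ge0$. Buyer 0 then observes the tips and $v_0$, may make the proposer a take-it-or-leave-it offer of a subset $S\subseteq\{1,\dots,n\}$ and a payment $p$ to exclude the bids in $S$, and submits his own bid $b_0$. The proposer accepts iff $p\ge\sum_{i\in S}t_i$, in which case he includes exactly the bids of $N\setminus S$ and receives $p$; otherwise he includes all bids. The second-price auction is computed on the included bids (highest included bid wins if at least $r$, paying the maximum of $r$ and the other included bids). A bidder pays his tip iff his bid is included. *)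

(* Defs.v *)
From HB Require Import structures.
From mathcomp Require Import all_boot all_order all_algebra.
From mathcomp Require Import reals.
Set Implicit Arguments. Unset Strict Implicit. Unset Printing Implicit Defensive.
Import Order.TTheory GRing.Theory Num.Theory.
Local Open Scope ring_scope.

(* Bidders 1..n are indexed by 'I_n; bidder 0 is treated separately.      *)
(* An action of bidder 0: an optional take-it-or-leave-it offer (S, p) to *)
(* the proposer (exclude the bids in S for a payment p), and his bid b0.  *)
Record action (R : realType) (n : nat) := Action {
  offer : option ({set 'I_n} * R);
  bid0 : R }.

Definition valid_action (R : realType) (n : nat) (a : action R n) : bool :=
  if offer a is Some (_, p) then 0 <= p else true.

Definition accepted (R : realType) (n : nat) (tips : 'I_n -> R)
  (S : {set 'I_n}) (p : R) : bool := \sum_(i in S) tips i <= p.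

Definition included (R : realType) (n : nat) (tips : 'I_n -> R)
  (a : action R n) : {set 'I_n} :=
  match offer a with
  | Some (X, p) => if accepted tips X p then ~: X else setT
  | None => setT
  end.

Definition bribe_paid (R : realType) (n : nat) (tips : 'I_n -> R)
  (a : action R n) : R :=
  match offer a with
  | Some (X, p) => if accepted tips X p then p else 0
  | None => 0
  end.

Definition wins0 (R : realType) (n : nat) (r : R) (tie0 : bool)
  (b : 'I_n -> R) (I : {set 'I_n}) (b0 : R) : bool :=
  (r <= b0) && [forall i in I, (b i < b0) || (tie0 && (b i == b0))].

Definition price0 (R : realType) (n : nat) (r : R) (b : 'I_n -> R)
  (I : {set 'I_n}) : R := \big[Num.max/r]_(i in I) b i.

(* tip.                                                                   *)
Definition utility0 (R : realType) (n : nat) (r : R) (tie0 : bool) (v0 : R)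
  (b tips : 'I_n -> R) (a : action R n) : R :=
  let I := included tips a in
  (if wins0 r tie0 b I (bid0 a) then v0 - price0 r b I else 0)
  - bribe_paid tips a.

Definition bribe_strategy (R : realType) (n : nat) (tips : 'I_n -> R)
  (v0 : R) : action R n :=
  if \sum_i tips i <= v0 then Action (Some (setT, \sum_i tips i)) v0
  else Action None v0.

(* Main.v *)
Require Import Defs.
From HB Require Import structures.
From mathcomp Require Import all_boot all_order all_algebra.
From mathcomp Require Import reals.
Import Order.TTheory GRing.Theory Num.Theory.
Local Open Scope ring_scope.

Lemma price_ge0 {R : realType} {n : nat} (b : 'I_n -> R) (I : {set 'I_n}) : 0 <= price0 0 b I.
Proof. exact: bigmax_ge_id. Qed.

Lemma price_ge {R : realType} {n : nat} (b : 'I_n -> R) (I : {set 'I_n}) i : i \in I -> b i <= price0 0 b I.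
Proof. move=> iI; exact: (le_bigmax_cond _ _ iI). Qed.

Lemma price_le {R : realType} {n : nat} (b : 'I_n -> R) (I : {set 'I_n}) x : 0 <= x ->
  (forall i, i \in I -> b i <= x) -> price0 0 b I <= x.
Proof. move=> x0 H; exact: bigmax_le. Qed.

Lemma sum_le_price {R : realType} {n : nat} (b tips : 'I_n -> R) (Y : {set 'I_n}) :
  (forall i, 0 <= tips i <= b i / n%:R) -> \sum_(i in Y) tips i <= price0 0 b Y.
Proof.
move=> ht.
have P0 := price_ge0 b Y.
have -> : price0 0 b Y = price0 0 b Y / n%:R *+ n.
  case: n b tips Y ht P0 => [|n] b tips Y ht P0.
    by rewrite /price0 big_pred0 // => -[].
  by rewrite -mulr_natr divfK // pnatr_eq0.
apply: (le_trans (y := \sum_(i in Y) (price0 0 b Y / n%:R))).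
  apply: ler_sum => i iY; have /andP[_ h] := ht i; apply: (le_trans h).
  by rewrite ler_wpM2r // ?invr_ge0 ?ler0n // price_ge.
rewrite sumr_const; apply: ler_wpMn2l; first by rewrite divr_ge0 ?ler0n.
by rewrite -[n in (_ <= n)%N]card_ord subset_leq_card // subset_predT.
Qed.
Theorem lemma1 (R : realType) (n : nat) (t : R -> R)
  (ht : forall v : R, 0 <= v <= 1 -> 0 <= t v <= v / n%:R)
  (tie0 : bool) (v0 : R) (hv0 : 0 <= v0 <= 1)
  (v : 'I_n -> R) (hv : forall i, 0 <= v i <= 1)
  (a : action R n) (ha : valid_action a) :
  utility0 0 tie0 v0 v (fun i => t (v i)) a
    <= utility0 0 tie0 v0 v (fun i => t (v i))
         (bribe_strategy (fun i => t (v i)) v0).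
Proof.
set s := fun i => t (v i).
have hs : forall i, 0 <= s i <= v i / n%:R by move=> i; exact: ht.
set T := \sum_i s i.
set P := price0 0 v setT.
have s0 : forall i, 0 <= s i by move=> i; case/andP: (hs i).
have sT : \sum_(i in [set: 'I_n]) s i = T by apply: eq_bigl => i; rewrite in_setT.
have split : forall X : {set 'I_n}, T = \sum_(i in X) s i + \sum_(i in ~: X) s i.
  move=> X; rewrite /T (bigID (mem X)) /=; congr (_ + _); apply: eq_bigl => i //.
  by rewrite in_setC.
have HT : T <= P by rewrite -sT; exact: sum_le_price.
have P0 := price_ge0 v.
case/andP: hv0 => v00 v01.
have RHS : utility0 0 tie0 v0 v s (bribe_strategy s v0) =
   if T <= v0 then v0 - T else
   (if wins0 0 tie0 v setT v0 then v0 - P else 0).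
  rewrite /bribe_strategy; case: ifP => hT.
    rewrite /utility0 /included /bribe_paid /= /accepted sT lexx setCT.
    rewrite /wins0 v00 /=.
    have -> : [forall i in set0, (v i < v0) || tie0 && (v i == v0)] by apply/forall_inP => i; rewrite in_set0.
    by rewrite /price0 big_set0 subr0.
  by rewrite /utility0 /included /bribe_paid /= subr0.
rewrite RHS.
set U := (if _ then _ else _).
have U0 : 0 <= U.
  rewrite /U; case: ifP => hT; first by rewrite subr_ge0.
  case: ifP => // /andP[_ /forall_inP W]; rewrite subr_ge0; apply: price_le => // i _.
  by case/orP: (W i (in_setT i)) => [/ltW //|/andP[_ /eqP ->]].
have U1 : v0 - T <= U.
  case hT: (T <= v0); first by rewrite /U hT.
  apply: (le_trans _ U0); rewrite subr_le0; apply/ltW; by rewrite ltNge hT.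
have U2 : v0 - P <= U.
  rewrite /U; case: ifP => hT; first by rewrite lerB.
  case: ifP => // /negbT; rewrite /wins0 v00 /= => /forall_inPn [i _].
  rewrite negb_or -leNgt => /andP[hi _].
  by rewrite subr_le0 (le_trans hi) // price_ge // in_setT.
clear RHS.
rewrite /utility0.
case: a ha => [[[X p]|] b0] /=; rewrite /valid_action /included /bribe_paid /=.
  move=> p0; case acc: (accepted s X p).
    case: ifP => _; last by apply: (le_trans _ U0); rewrite sub0r oppr_le0.
    apply: (le_trans _ U1); rewrite (split X) (addrC (\sum_(i in X) s i)) opprD addrA.
    apply: lerB; last exact: acc.
    apply: lerB => //; exact: sum_le_price.
  rewrite subr0; case: ifP => _ //; by rewrite -/P.
rewrite subr0; case: ifP => _ //; by rewrite -/P.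
Qed.
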